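(* Let $K\subset\mathbb{C}$ be a subfield. Let $\mathcal{A}=\{H_1,\dots,H_n\}$ be an arrangement of distinct lines in $\mathbb{P}^2_{\mathbb{C}}$ with $|H_n\cap\operatorname{mult}(\mathcal{A})|\le 2$, and let $\mathcal{A}'=\{H_1,\dots,H_{n-1}\}$, $I=I(\mathcal{A})$, $I'=I(\mathcal{A}')$. If the set $\mathcal{R}(I')(K)$ of $K$-valued points is Zariski dense in $\mathcal{R}(I')(\mathbb{C})$, then $\mathcal{R}(I)(K)$ is Zariski dense in $\mathcal{R}(I)(\mathbb{C})$; in particular $\mathcal{R}(I)(K)\ne\emptyset$, i.e. $I$ is realizable over $K$. Moreover, for every inductively connected arrangement $\mathcal{A}$, the incidence $I(\mathcal{A})$ is realizable over $\mathbb{Q}$.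
   Context: Lines $H_i=\{a_ix+b_iy+c_iz=0\}$ are identified with points $(a_i:b_i:c_i)\in(\mathbb{P}^2)^*$; $\det(H_i,H_j,H_k)$ is the determinant of their coefficient rows. $I(\mathcal{A})=\{\{i,j,k\}: H_i\cap H_j\cap H_k\ne\emptyset\}$. $\mathcal{R}(I)=\{(H_1,\dots,H_n)\in((\mathbb{P}^2)^* )^n: H_i\ne H_j\ (i\ne j),\ \det(H_i,H_j,H_k)=0 \text{ iff } \{i,j,k\}\in I\}$; $\mathcal{R}(I)(K)$ denotes its points all of whose lines have coordinates in $K$; $I$ is realizable over $K$ if $\mathcal{R}(I)(K)\neq\emptyset$ (equivalently, some arrangement with defining linear forms over $K$ has incidence $I$). $\operatorname{mult}(\mathcal{A})$ is the set of points on at least three lines of $\mathcal{A}$. $\mathcal{A}$ is inductively connected (i.c.) if its lines can be numbered $H_1,\dots,H_n$ so that $|H_t\cap\operatorname{mult}(\{H_1,\dots,H_t\})|\le 2$ for all $t$. *)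

(* Defs.v *)
From HB Require Import structures.
From mathcomp Require Import all_boot all_order all_algebra all_fingroup.
Set Implicit Arguments. Unset Strict Implicit. Unset Printing Implicit Defensive.
Import Order.TTheory GRing.Theory Num.Theory.
Local Open Scope ring_scope.

Section Defs.
Variable C : numClosedFieldType.

(* A line a x + b y + c z = 0 (or a point) is given by a coordinate row vector
   in C^3; a nonzero one represents a point of P^2 (or of the dual P^2). *)
Definition vec3 := 'rV[C]_3.

Definition proportional (a b : vec3) : Prop := exists l : C, a = l *: b.

Definition onLine (p H : vec3) : Prop := \sum_(s < 3) H 0 s * p 0 s = 0.

Definition det3 (a b c : vec3) : C :=
  \det (\matrix_(r < 3, s < 3)
          (if (r : nat) == 0%N then a 0 s else if (r : nat) == 1%N then b 0 s
           else c 0 s)).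

Definition arrangement (m : nat) (A : 'I_m -> vec3) : Prop :=
  (forall i, A i != 0) /\ (forall i j, i != j -> ~ proportional (A i) (A j)).

Definition incid (m : nat) (A : 'I_m -> vec3) (S : {set 'I_m}) : Prop :=
  #|S| = 3%N /\ exists p : vec3, p != 0 /\ forall i, i \in S -> onLine p (A i).

(* the cone over R(I)(C) in (C^3 \ 0)^m *)
Definition RC (m : nat) (I : {set 'I_m} -> Prop) (v : 'I_m -> vec3) : Prop :=
  (forall i, v i != 0) /\
  (forall i j, i != j -> ~ proportional (v i) (v j)) /\
  (forall i j k, i != j -> j != k -> i != k ->
     (det3 (v i) (v j) (v k) = 0 <-> I [set i; j; k])).

Definition is_subfield (K : C -> Prop) : Prop :=
  K 1 /\ (forall x y, K x -> K y -> K (x - y)) /\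
  (forall x y, K x -> K y -> y != 0 -> K (x / y)).

Definition ratK (x : C) : Prop := exists q : rat, x = ratr q.

Definition RK (K : C -> Prop) (m : nat) (I : {set 'I_m} -> Prop)
    (v : 'I_m -> vec3) : Prop :=
  RC I v /\ forall i, exists (l : C) (w : vec3), v i = l *: w /\ forall s, K (w 0 s).

Inductive mpoly (V : Type) : Type :=
| PVar of V
| PConst of C
| PAdd of mpoly V & mpoly V
| PMul of mpoly V & mpoly V
| POpp of mpoly V.

Fixpoint peval (V : Type) (e : V -> C) (p : mpoly V) : C :=
  match p with
  | PVar x => e x
  | PConst c => c
  | PAdd p q => peval e p + peval e q
  | PMul p q => peval e p * peval e q
  | POpp p => - peval e p
  end.

Definition coords (m : nat) (v : 'I_m -> vec3) (x : 'I_m * 'I_3) : C :=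
  v x.1 0 x.2.

Definition zdense (m : nat) (S X : ('I_m -> vec3) -> Prop) : Prop :=
  forall p : mpoly ('I_m * 'I_3),
    (forall v, S v -> peval (coords v) p = 0) ->
    forall v, X v -> peval (coords v) p = 0.

Definition multPt (m : nat) (A : 'I_m -> vec3) (T : {set 'I_m}) (p : vec3) : Prop :=
  p != 0 /\ exists i j k, [/\ i \in T, j \in T & k \in T] /\ [/\ i != j, j != k & i != k] /\
    onLine p (A i) /\ onLine p (A j) /\ onLine p (A k).

Definition atMost2Mult (m : nat) (A : 'I_m -> vec3) (T : {set 'I_m}) (h : 'I_m) : Prop :=
  ~ exists p1 p2 p3 : vec3,
      [/\ onLine p1 (A h), onLine p2 (A h) & onLine p3 (A h)] /\
      [/\ multPt A T p1, multPt A T p2 & multPt A T p3] /\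
      [/\ ~ proportional p1 p2, ~ proportional p2 p3 & ~ proportional p1 p3].

Definition ind_connected (m : nat) (A : 'I_m -> vec3) : Prop :=
  exists sigma : 'S_m, forall t : 'I_m,
    atMost2Mult A [set sigma u | u : 'I_m & (u <= t)%N] (sigma t).

End Defs.

(* Main.v *)
Require Import Defs.
From HB Require Import structures.
From mathcomp Require Import all_boot all_order all_algebra all_fingroup.
From Stdlib Require Import Ring Field Classical FunctionalExtensionality.
Import Order.TTheory GRing.Theory Num.Theory.
Local Open Scope ring_scope.
Set Implicit Arguments. Unset Strict Implicit. Unset Printing Implicit Defensive.

Section Geo.
Variable C : numClosedFieldType.

Definition addF (x y : C) : C := x + y.
Definition mulF (x y : C) : C := x * y.
Definition oppF (x : C) : C := - x.
Definition subF (x y : C) : C := x - y.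
Definition invF (x : C) : C := x^-1.
Definition divF (x y : C) : C := x / y.
Definition zF : C := 0.
Definition oF : C := 1.
Lemma Fth : @field_theory C zF oF addF mulF subF oppF divF invF eq.
Proof.
constructor.
- constructor; [exact: add0r|exact: addrC|exact: addrA|exact: mul1r|exact: mulrC|exact: mulrA|exact: mulrDl|by []|exact: subrr].
- by rewrite /zF /oF => h; move: (oner_neq0 C); rewrite h eqxx.
- by [].
- by move=> p /eqP hp; rewrite /mulF /invF mulVf.
Qed.
Add Field Cfield : Fth.
Lemma addFE (x y : C) : x + y = addF x y. by []. Qed.
Lemma mulFE (x y : C) : x * y = mulF x y. by []. Qed.
Lemma oppFE (x : C) : - x = oppF x. by []. Qed.
Lemma invFE (x : C) : x^-1 = invF x. by []. Qed.
Lemma zFE : 0 = zF :> C. by []. Qed.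
Lemma oFE : 1 = oF :> C. by []. Qed.
Ltac toF := rewrite ?expr2 ?mulr2n ?invFE ?mulFE ?oppFE ?addFE ?zFE ?oFE;
  match goal with |- @eq _ ?x ?y => change (@eq C x y) end.
Ltac cring := toF; ring.
Ltac cfield := toF; field.

Notation vec := (vec3 C).
Definition co (x : vec) (k : nat) : C := x 0 (inord k).

Lemma liftE3 (h : 'I_3) (j : 'I_2) : lift h j = inord (bump h j).
Proof. apply: val_inj => /=; rewrite inordK //; exact: (ltn_ord (lift h j)). Qed.
Lemma liftE2 (h : 'I_2) (j : 'I_1) : lift h j = inord (bump h j).
Proof. apply: val_inj => /=; rewrite inordK //; exact: (ltn_ord (lift h j)). Qed.
Lemma ord0E3 : (ord0 : 'I_3) = inord 0. Proof. by apply: val_inj; rewrite /= inordK. Qed.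
Lemma ord0E2 : (ord0 : 'I_2) = inord 0. Proof. by apply: val_inj; rewrite /= inordK. Qed.
Lemma ord0E1 : (ord0 : 'I_1) = inord 0. Proof. by apply: val_inj; rewrite /= inordK. Qed.

Lemma ord3P (s : 'I_3) : s = inord 0 \/ s = inord 1 \/ s = inord 2.
Proof.
case: s => [[|[|[|m]]] hm].
- by left; apply: val_inj; rewrite /= inordK.
- by right; left; apply: val_inj; rewrite /= inordK.
- by right; right; apply: val_inj; rewrite /= inordK.
- by [].
Qed.

Lemma vec_eq (x y : vec) : co x 0 = co y 0 -> co x 1 = co y 1 -> co x 2 = co y 2 -> x = y.
Proof.
move=> h0 h1 h2; apply/rowP => s.
by case: (ord3P s) => [->|[->|->]].
Qed.

Lemma co_vec (x : vec) (s : 'I_3) : x 0 s = co x (val s).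
Proof. by rewrite /co inord_val. Qed.

Lemma sum3 (f : 'I_3 -> C) : \sum_(s < 3) f s = f (inord 0) + f (inord 1) + f (inord 2).
Proof.
rewrite !big_ord_recl big_ord0 addr0 addrA ?liftE3 ?liftE2 /bump /=.
by rewrite ?inordK //= ord0E3 ?addn0.
Qed.

Definition dot (x y : vec) : C := \sum_(s < 3) x 0 s * y 0 s.
Lemma dotE x y : dot x y = co x 0 * co y 0 + co x 1 * co y 1 + co x 2 * co y 2.
Proof. by rewrite /dot sum3. Qed.
Lemma onLineE p H : onLine p H <-> dot H p = 0.
Proof. by []. Qed.

Definition cross (a b : vec) : vec :=
  \row_(s < 3) (if nat_of_ord s == 0%N then co a 1 * co b 2 - co a 2 * co b 1
                else if nat_of_ord s == 1%N then co a 2 * co b 0 - co a 0 * co b 2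
                else co a 0 * co b 1 - co a 1 * co b 0).
Lemma crossE0 a b : co (cross a b) 0 = co a 1 * co b 2 - co a 2 * co b 1.
Proof. by rewrite {1}/co mxE inordK. Qed.
Lemma crossE1 a b : co (cross a b) 1 = co a 2 * co b 0 - co a 0 * co b 2.
Proof. by rewrite {1}/co mxE inordK. Qed.
Lemma crossE2 a b : co (cross a b) 2 = co a 0 * co b 1 - co a 1 * co b 0.
Proof. by rewrite {1}/co mxE inordK. Qed.
Lemma coZ l x k : co (l *: x) k = l * co x k.
Proof. by rewrite /co mxE. Qed.
Lemma coD x y k : co (x + y) k = co x k + co y k.
Proof. by rewrite /co mxE. Qed.
Lemma coN x k : co (- x) k = - co x k.
Proof. by rewrite /co mxE. Qed.
Lemma co0 k : co 0 k = 0.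
Proof. by rewrite /co mxE. Qed.
Definition coE := (crossE0, crossE1, crossE2, coZ, coD, coN, co0).

Lemma det3E a b c : det3 a b c = dot c (cross a b).
Proof.
rewrite dotE !coE.
rewrite /det3 (expand_det_row _ ord0) !big_ord_recl big_ord0 /cofactor.
rewrite !(expand_det_row _ ord0) !big_ord_recl !big_ord0 /cofactor.
rewrite !(expand_det_row _ ord0) !big_ord_recl !big_ord0 /cofactor !det_mx00.
rewrite !mxE /=.
rewrite ?liftE3 ?liftE2 ?mxE /=.
rewrite ?liftE3 ?liftE2 ?mxE /=.
rewrite ?ord0E3 ?ord0E2 ?ord0E1 /=.
rewrite ?inordK // /=. rewrite ?inordK // /=. rewrite ?inordK // /=. rewrite !add0n /=.
rewrite /bump /= ?addn0 ?add0n ?expr0 ?expr1.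
rewrite -/(co a 0) -/(co a 1) -/(co a 2) -/(co b 0) -/(co b 1) -/(co b 2) -/(co c 0) -/(co c 1) -/(co c 2).
cring.
Qed.


Lemma dotC x y : dot x y = dot y x.
Proof. rewrite !dotE; cring. Qed.
Lemma dotZr x l y : dot x (l *: y) = l * dot x y.
Proof. rewrite !dotE !coE; cring. Qed.
Lemma dot_cross_l a b : dot a (cross a b) = 0.
Proof. rewrite !dotE !coE; cring. Qed.
Lemma dot_cross_r a b : dot b (cross a b) = 0.
Proof. rewrite !dotE !coE; cring. Qed.
Lemma crossBAC x y z : cross x (cross y z) = (dot x z) *: y - (dot x y) *: z.
Proof. apply: vec_eq; rewrite !dotE !coE; cring. Qed.
Lemma crossZl l a b : cross (l *: a) b = l *: cross a b.
Proof. apply: vec_eq; rewrite !coE; cring. Qed.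
Lemma crossZr l a b : cross a (l *: b) = l *: cross a b.
Proof. apply: vec_eq; rewrite !coE; cring. Qed.
Lemma cross_prop l b : cross (l *: b) b = 0.
Proof. apply: vec_eq; rewrite !coE; cring. Qed.
Lemma cross_prop' l b : cross b (l *: b) = 0.
Proof. apply: vec_eq; rewrite !coE; cring. Qed.

Lemma vec_neq0 x : x != 0 -> co x 0 != 0 \/ co x 1 != 0 \/ co x 2 != 0.
Proof.
move=> hx; case: (eqVneq (co x 0) 0) => h0; last by left.
case: (eqVneq (co x 1) 0) => h1; last by right; left.
case: (eqVneq (co x 2) 0) => h2; last by right; right.
by case/eqP: hx; apply: vec_eq; rewrite !coE.
Qed.

Lemma cross0_prop a b : b != 0 -> cross a b = 0 -> proportional a b.
Proof.
move=> hb hc.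
have e0 : co (cross a b) 0 = 0 by rewrite hc coE.
have e1 : co (cross a b) 1 = 0 by rewrite hc coE.
have e2 : co (cross a b) 2 = 0 by rewrite hc coE.
rewrite !coE in e0 e1 e2.
case: (vec_neq0 hb) => [h|[h|h]].
- exists (co a 0 / co b 0); apply: vec_eq; rewrite !coE.
  + by cfield; apply/eqP.
  + move/eqP: e2; rewrite subr_eq0 => /eqP e2. 
    have -> : co a 1 = co a 1 * co b 0 / co b 0 by cfield; apply/eqP.
    rewrite -e2; cfield; by apply/eqP.
  + move/eqP: e1; rewrite subr_eq0 => /eqP e1. 
    have -> : co a 2 = co a 2 * co b 0 / co b 0 by cfield; apply/eqP.
    rewrite e1; cfield; by apply/eqP.
- exists (co a 1 / co b 1); apply: vec_eq; rewrite !coE.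
  + move/eqP: e2; rewrite subr_eq0 => /eqP e2. 
    have -> : co a 0 = co a 0 * co b 1 / co b 1 by cfield; apply/eqP.
    rewrite e2; cfield; by apply/eqP.
  + by cfield; apply/eqP.
  + move/eqP: e0; rewrite subr_eq0 => /eqP e0. 
    have -> : co a 2 = co a 2 * co b 1 / co b 1 by cfield; apply/eqP.
    rewrite -e0; cfield; by apply/eqP.
- exists (co a 2 / co b 2); apply: vec_eq; rewrite !coE.
  + move/eqP: e1; rewrite subr_eq0 => /eqP e1. 
    have -> : co a 0 = co a 0 * co b 2 / co b 2 by cfield; apply/eqP.
    rewrite -e1; cfield; by apply/eqP.
  + move/eqP: e0; rewrite subr_eq0 => /eqP e0. 
    have -> : co a 1 = co a 1 * co b 2 / co b 2 by cfield; apply/eqP.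
    rewrite e0; cfield; by apply/eqP.
  + by cfield; apply/eqP.
Qed.

Lemma perp_cross P h : P != 0 -> dot h P = 0 -> exists q, h = cross P q.
Proof.
move=> hP; rewrite dotE => e.
case: (vec_neq0 hP) => [h0|[h0|h0]].
- exists (\row_(s < 3) (if nat_of_ord s == 0%N then 0 else if nat_of_ord s == 1%N then co h 2 / co P 0 else - co h 1 / co P 0)).
  apply: vec_eq; rewrite !coE /co !mxE ?inordK //= -!/(co _ _).
  + have -> : co h 0 = (co h 0 * co P 0) / co P 0 by cfield; apply/eqP.
    have -> : co h 0 * co P 0 = - (co h 1 * co P 1 + co h 2 * co P 2).
      by apply/eqP; rewrite -subr_eq0 opprK addrA e.
    cfield; by apply/eqP.
  + cfield; by apply/eqP.
  + cfield; by apply/eqP.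
- exists (\row_(s < 3) (if nat_of_ord s == 0%N then - co h 2 / co P 1 else if nat_of_ord s == 1%N then 0 else co h 0 / co P 1)).
  apply: vec_eq; rewrite !coE /co !mxE ?inordK //= -!/(co _ _).
  + cfield; by apply/eqP.
  + have -> : co h 1 = (co h 1 * co P 1) / co P 1 by cfield; apply/eqP.
    have -> : co h 1 * co P 1 = - (co h 0 * co P 0 + co h 2 * co P 2).
      apply/eqP; rewrite -subr_eq0 opprK addrC -addrA (addrC (co h 2 * _)) addrA e //.
    cfield; by apply/eqP.
  + cfield; by apply/eqP.
- exists (\row_(s < 3) (if nat_of_ord s == 0%N then co h 1 / co P 2 else if nat_of_ord s == 1%N then - co h 0 / co P 2 else 0)).
  apply: vec_eq; rewrite !coE /co !mxE ?inordK //= -!/(co _ _).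
  + cfield; by apply/eqP.
  + cfield; by apply/eqP.
  + have -> : co h 2 = (co h 2 * co P 2) / co P 2 by cfield; apply/eqP.
    have -> : co h 2 * co P 2 = - (co h 0 * co P 0 + co h 1 * co P 1).
      by apply/eqP; rewrite -subr_eq0 opprK addrC e.
    cfield; by apply/eqP.
Qed.

Definition cp (a b c : vec) : Prop :=
  exists p : vec, p != 0 /\ dot a p = 0 /\ dot b p = 0 /\ dot c p = 0.

Lemma det3_cp a b c : det3 a b c = 0 <-> cp a b c.
Proof.
rewrite /det3 -det_tr.
set M := (\matrix_(r, s) _)^T.
have key : forall (v : vec) (r : 'I_3), (v *m M) 0 r =
   dot (if nat_of_ord r == 0%N then a else if nat_of_ord r == 1%N then b else c) v.
  move=> v r; rewrite !mxE /dot; apply: eq_bigr => s _; rewrite !mxE mulrC.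
  by case: (nat_of_ord r == 0%N); case: (nat_of_ord r == 1%N).
split.
- move/eqP/det0P => [v hv0 hv]; exists v; split => //.
  have := key v (inord 0); have := key v (inord 1); have := key v (inord 2).
  rewrite hv !mxE !inordK //=.
- move=> [p [hp [ha [hb hc]]]]; apply/eqP/det0P; exists p => //.
  apply/rowP => r; rewrite key mxE.
  by case: (ord3P r) => [->|[->|->]]; rewrite inordK.
Qed.

Lemma cp_det a b c : cp a b c <-> dot c (cross a b) = 0.
Proof. rewrite -det3E; exact: iff_sym (det3_cp a b c). Qed.

Lemma cp_aab a b : cp a a b.
Proof. apply/cp_det; rewrite dotE !coE; cring. Qed.

Lemma cpC1 a b c : cp a b c -> cp b a c.
Proof. by move=> [p [? [? [? ?]]]]; exists p. Qed.
Lemma cpC2 a b c : cp a b c -> cp a c b.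
Proof. by move=> [p [? [? [? ?]]]]; exists p. Qed.
Lemma cpC3 a b c : cp a b c -> cp c b a.
Proof. by move=> [p [? [? [? ?]]]]; exists p. Qed.

Lemma cp_of P a b c : P != 0 -> dot a P = 0 -> dot b P = 0 -> dot c P = 0 -> cp a b c.
Proof. by move=> *; exists P. Qed.

Lemma card3 m (i j k : 'I_m) : i != j -> j != k -> i != k -> #|[set i; j; k]| = 3%N.
Proof.
move=> hij hjk hik.
rewrite setUC cardsU1 cards2 !inE.
by rewrite hij eq_sym (negbTE hik) eq_sym (negbTE hjk).
Qed.

Lemma incid_cp m (A : 'I_m -> vec) i j k : i != j -> j != k -> i != k ->
  (incid A [set i; j; k] <-> cp (A i) (A j) (A k)).
Proof.
move=> hij hjk hik; split.
- move=> [_ [p [hp hS]]]; exists p; split => //.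
  by split; [|split]; apply: hS; rewrite !inE eqxx ?orbT.
- move=> [p [hp [ha [hb hc]]]]; split; first exact: card3.
  exists p; split => // x; rewrite !inE => /orP [/orP [] | ] /eqP ->; done.
Qed.

Definition RC' m (A : 'I_m -> vec) (v : 'I_m -> vec) : Prop :=
  (forall i, v i != 0) /\ (forall i j, i != j -> ~ proportional (v i) (v j)) /\
  (forall i j k, i != j -> j != k -> i != k -> (cp (v i) (v j) (v k) <-> cp (A i) (A j) (A k))).

Lemma RCE m (A : 'I_m -> vec) v : RC (incid A) v <-> RC' A v.
Proof.
split.
- move=> [h1 [h2 h3]]; split => //; split => // i j k hij hjk hik.
  split.
  + by move/det3_cp/(h3 _ _ _ hij hjk hik)/(incid_cp _ hij hjk hik).
  + by move/(incid_cp _ hij hjk hik)/(h3 _ _ _ hij hjk hik)/det3_cp.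
- move=> [h1 [h2 h3]]; split => //; split => // i j k hij hjk hik.
  split.
  + by move/det3_cp/(h3 _ _ _ hij hjk hik)/(incid_cp _ hij hjk hik).
  + by move/(incid_cp _ hij hjk hik)/(h3 _ _ _ hij hjk hik)/det3_cp.
Qed.

Lemma arr_RC' m (A : 'I_m -> vec) : arrangement A -> RC' A A.
Proof. by move=> [h1 h2]; split => //; split. Qed.

Lemma cp_rotl a b c : cp a b c -> cp b c a.
Proof. by move=> [p [? [? [? ?]]]]; exists p. Qed.
Lemma cp_rotr a b c : cp a b c -> cp c a b.
Proof. by move=> [p [? [? [? ?]]]]; exists p. Qed.
Lemma cpP2 a b c : cp a b c <-> cp a c b.
Proof. by split; apply: cpC2. Qed.
Lemma cpP3 a b c : cp a b c <-> cp c b a.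
Proof. by split; apply: cpC3. Qed.

Section Ext.
Variable n : nat.
Notation N := (@ord_max n).

Lemma widen_lift (y : 'I_n) : widen_ord (leqnSn n) y = lift N y.
Proof. by apply: val_inj; rewrite /= /bump leqNgt ltn_ord. Qed.

Definition ext (v' : 'I_n -> vec) (h : vec) (x : 'I_n.+1) : vec :=
  if unlift N x is Some y then v' y else h.
Lemma ext_lift v' h y : ext v' h (lift N y) = v' y.
Proof. by rewrite /ext liftK. Qed.
Lemma ext_max v' h : ext v' h N = h.
Proof. by rewrite /ext unlift_none. Qed.

Lemma ordS_case (x : 'I_n.+1) : x = N \/ exists y, x = lift N y.
Proof. by case: (unliftP N x) => [y ->|->]; [right; exists y|left]. Qed.

Lemma lift_neq (a b : 'I_n) : (lift N a != lift N b) = (a != b).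
Proof. by rewrite (inj_eq (@lift_inj _ N)). Qed.
Lemma lift_neqN (a : 'I_n) : lift N a != N.
Proof. by rewrite eq_sym neq_lift. Qed.

Lemma RC'_ext (A : 'I_n.+1 -> vec) v' h :
  RC' (fun i => A (lift N i)) v' -> h != 0 ->
  (forall i, ~ proportional h (v' i) /\ ~ proportional (v' i) h) ->
  (forall i j, i != j -> (cp (v' i) (v' j) h <-> cp (A (lift N i)) (A (lift N j)) (A N))) ->
  RC' A (ext v' h).
Proof.
move=> [r1 [r2 r3]] h1 h2 h3; split; [|split].
- move=> x; case: (ordS_case x) => [->|[y ->]]; by rewrite ?ext_max ?ext_lift.
- move=> x y; case: (ordS_case x) => [->|[x' ->]]; case: (ordS_case y) => [->|[y' ->]];
    rewrite ?ext_max ?ext_lift ?eqxx //.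
  + by move=> _; case: (h2 y').
  + by move=> _; case: (h2 x').
  + by rewrite lift_neq; apply: r2.
- move=> x y z; case: (ordS_case x) => [->|[x' ->]]; case: (ordS_case y) => [->|[y' ->]];
    case: (ordS_case z) => [->|[z' ->]]; rewrite ?ext_max ?ext_lift ?eqxx // ?lift_neq.
  + move=> _ hyz _; have [H1 H2] := h3 _ _ hyz; split => H.
    * by apply: cp_rotr; apply: H1; apply: cp_rotl.
    * by apply: cp_rotr; apply: H2; apply: cp_rotl.
  + move=> _ _ hxz; have [H1 H2] := h3 _ _ hxz; split => H.
    * by apply: cpC2; apply: H1; apply: cpC2.
    * by apply: cpC2; apply: H2; apply: cpC2.
  + move=> hxy _ _; exact: h3.
  + exact: r3.
Qed.

Lemma RC'_restrict (A : 'I_n.+1 -> vec) v : RC' A v ->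
  [/\ RC' (fun i => A (lift N i)) (fun i => v (lift N i)), v N != 0,
  (forall i, ~ proportional (v N) (v (lift N i)) /\ ~ proportional (v (lift N i)) (v N)) &
  (forall i j, i != j -> (cp (v (lift N i)) (v (lift N j)) (v N) <-> cp (A (lift N i)) (A (lift N j)) (A N)))].
Proof.
move=> [r1 [r2 r3]]; split => //.
- split => //; split.
  + by move=> i j hij; apply: r2; rewrite lift_neq.
  + by move=> i j k hij hjk hik; apply: r3; rewrite lift_neq.
- move=> i; split; apply: r2; rewrite ?lift_neqN // eq_sym lift_neqN //.
- move=> i j hij; apply: r3; rewrite ?lift_neq ?lift_neqN //.
Qed.

Lemma ext_restrict (v : 'I_n.+1 -> vec) x : ext (fun i => v (lift N i)) (v N) x = v x.
Proof. by case: (ordS_case x) => [->|[y ->]]; rewrite ?ext_max ?ext_lift. Qed.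
End Ext.

Section Poly.
Variable V : Type.
Implicit Types (e : V -> C) (p : mpoly C V).

Lemma peval_ext e1 e2 p : (forall x, e1 x = e2 x) -> peval e1 p = peval e2 p.
Proof. by move=> he; elim: p => //= [p1 -> p2 ->|p1 -> p2 ->|p1 ->]. Qed.

Fixpoint msubst (W : Type) (p : mpoly C W) (s : W -> mpoly C V) : mpoly C V :=
  match p with
  | PVar x => s x
  | PConst c => @PConst C V c
  | PAdd p q => PAdd (msubst p s) (msubst q s)
  | PMul p q => PMul (msubst p s) (msubst q s)
  | POpp p => POpp (msubst p s)
  end.

Lemma peval_subst W (p : mpoly C W) s e :
  peval e (msubst p s) = peval (fun x => peval e (s x)) p.
Proof. by elim: p => //= [p1 -> p2 ->|p1 -> p2 ->|p1 ->]. Qed.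

Fixpoint mprod (X : Type) (l : seq X) (f : X -> mpoly C V) : mpoly C V :=
  match l with [::] => @PConst C V 1 | x :: l' => PMul (f x) (mprod l' f) end.

Lemma peval_mprod X (l : seq X) f e : peval e (mprod l f) = \prod_(x <- l) peval e (f x).
Proof. by elim: l => [|x l IH] /=; rewrite ?big_nil ?big_cons ?IH. Qed.

Definition polyfun (f : C -> C) : Prop := exists P : {poly C}, forall t, f t = P.[t].

Lemma polyfun_const c : polyfun (fun _ => c).
Proof. by exists c%:P => t; rewrite hornerC. Qed.
Lemma polyfun_id : polyfun (fun t => t).
Proof. by exists 'X => t; rewrite hornerX. Qed.

Lemma peval_polyfun (E : C -> V -> C) p :
  (forall x, polyfun (fun t => E t x)) -> polyfun (fun t => peval (E t) p).
Proof.
move=> hE; elim: p => /=.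
- exact: hE.
- move=> c; exact: polyfun_const.
- move=> p [P hP] q [Q hQ]; exists (P + Q) => t; by rewrite hornerD hP hQ.
- move=> p [P hP] q [Q hQ]; exists (P * Q) => t; by rewrite hornerM hP hQ.
- move=> p [P hP]; exists (- P) => t; by rewrite hornerN hP.
Qed.
End Poly.

Lemma polyfun_nat0 (f : C -> C) : polyfun f -> (forall m : nat, f m%:R = 0) -> forall t, f t = 0.
Proof.
move=> [P hP] h0.
suff PE : P = 0 by move=> t; rewrite hP PE horner0.
  apply/eqP; apply: contraT => nzP.
  pose rs := [seq (m%:R : C) | m <- iota 0 (size P)].
  have := max_poly_roots nzP (rs := rs).
  rewrite size_map size_iota ltnn; apply.
  - by apply/allP => x /mapP [m _ ->]; rewrite /root -hP h0.
  - rewrite map_inj_uniq ?iota_uniq //.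
    by move=> a b /eqP; rewrite eqr_nat => /eqP.
Qed.

Lemma grid3 (f : C -> C -> C -> C) :
  (forall a b, polyfun (f a b)) -> (forall a c, polyfun (fun t => f a t c)) ->
  (forall b c, polyfun (fun t => f t b c)) ->
  (forall i j k : nat, f i%:R j%:R k%:R = 0) -> forall a b c, f a b c = 0.
Proof.
move=> p3 p2 p1 h.
have s1 : forall i j : nat, forall c, f i%:R j%:R c = 0.
  by move=> i j; apply: polyfun_nat0 => // k; apply: h.
have s2 : forall i : nat, forall b c, f i%:R b c = 0.
  by move=> i b c; apply: (polyfun_nat0 (f := fun t => f i%:R t c)) => // j; apply: s1.
by move=> a b c; apply: (polyfun_nat0 (f := fun t => f t b c)) => // i; apply: s2.
Qed.

Lemma prod_enum_neq0 (T : finType) (F : T -> C) :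
  (\prod_(x <- enum T) F x != 0) <-> (forall x, F x != 0).
Proof.
rewrite prodf_seq_neq0; split.
- by move/allP => h x; apply: (implyP (h x _)); rewrite ?mem_enum.
- by move=> h; apply/allP => x _; apply/implyP.
Qed.

Section Sub.
Variable K : C -> Prop.
Hypothesis hK : is_subfield K.
Lemma K1 : K 1. Proof. by case: hK. Qed.
Lemma KB x y : K x -> K y -> K (x - y). Proof. by case: hK => _ [h _]; apply: h. Qed.
Lemma K0 : K 0. Proof. by rewrite -(subrr 1); apply: KB; apply: K1. Qed.
Lemma KN x : K x -> K (- x). Proof. by move=> hx; rewrite -sub0r; apply: KB => //; apply: K0. Qed.
Lemma KD x y : K x -> K y -> K (x + y).
Proof. by move=> hx hy; rewrite -(opprK y); apply: KB => //; apply: KN. Qed.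
Lemma KM x y : K x -> K y -> K (x * y).
Proof.
move=> hx hy; case: (eqVneq y 0) => [->|hy0]; first by rewrite mulr0; apply: K0.
have hi : K (1 / y) by case: hK => _ [_ h]; apply: h => //; apply: K1.
have -> : x * y = x / (1 / y) by rewrite div1r invrK.
case: hK => _ [_ h]; apply: h => //.
by rewrite div1r invr_eq0.
Qed.
Lemma Knat (m : nat) : K m%:R.
Proof. elim: m => [|m IH]; first exact: K0. by rewrite -addn1 natrD; apply: KD => //; apply: K1. Qed.

Definition Kv (x : vec) := forall s, K (x 0 s).
Definition CK (x : vec) := exists (l : C) (w : vec), x = l *: w /\ forall s, K (w 0 s).

Lemma Kco x k : Kv x -> K (co x k). Proof. by move=> h; apply: h. Qed.

Lemma Kv_cross a b : Kv a -> Kv b -> Kv (cross a b).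
Proof.
move=> ha hb s; rewrite mxE.
case: ifP => _; [|case: ifP => _]; apply: KB; apply: KM; apply: Kco => //.
Qed.

Lemma CK_cross a b : CK a -> CK b -> CK (cross a b).
Proof.
move=> [l [w [-> hw]]] [l' [w' [-> hw']]].
exists (l * l'), (cross w w'); split; last exact: Kv_cross.
by rewrite crossZl crossZr scalerA.
Qed.

Lemma CK_scale c x : CK x -> CK (c *: x).
Proof. by move=> [l [w [-> hw]]]; exists (c * l), w; rewrite scalerA. Qed.

Lemma CK_Kv x : Kv x -> CK x.
Proof. by move=> h; exists 1, x; rewrite scale1r. Qed.
End Sub.

Section PVec.
Variable V : Type.
Definition veval (e : V -> C) (P : nat -> mpoly C V) : vec :=
  \row_(s < 3) peval e (P (nat_of_ord s)).
Lemma veval_co e P k : (k < 3)%N -> co (veval e P) k = peval e (P k).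
Proof. by move=> hk; rewrite /co mxE inordK. Qed.
Lemma veval_ent e P (s : 'I_3) : veval e P 0 s = peval e (P (nat_of_ord s)).
Proof. by rewrite mxE. Qed.

Definition pcross (P Q : nat -> mpoly C V) : nat -> mpoly C V := fun k =>
  if k == 0%N then PAdd (PMul (P 1%N) (Q 2%N)) (POpp (PMul (P 2%N) (Q 1%N)))
  else if k == 1%N then PAdd (PMul (P 2%N) (Q 0%N)) (POpp (PMul (P 0%N) (Q 2%N)))
  else PAdd (PMul (P 0%N) (Q 1%N)) (POpp (PMul (P 1%N) (Q 0%N))).
Lemma veval_cross e P Q : veval e (pcross P Q) = cross (veval e P) (veval e Q).
Proof. by apply: vec_eq; rewrite !coE !veval_co. Qed.

Definition pdot (P Q : nat -> mpoly C V) : mpoly C V :=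
  PAdd (PAdd (PMul (P 0%N) (Q 0%N)) (PMul (P 1%N) (Q 1%N))) (PMul (P 2%N) (Q 2%N)).
Lemma peval_dot e P Q : peval e (pdot P Q) = dot (veval e P) (veval e Q).
Proof. by rewrite dotE !veval_co. Qed.

Definition pscale (c : mpoly C V) (P : nat -> mpoly C V) : nat -> mpoly C V :=
  fun k => PMul c (P k).
Lemma veval_scale e c P : veval e (pscale c P) = peval e c *: veval e P.
Proof. by apply/rowP => s; rewrite !mxE. Qed.
End PVec.

Lemma iftrue (T : Type) (X Y : T) : (if true then X else Y) = X. Proof. by []. Qed.

Section Core.
Variable n : nat.
Notation N := (@ord_max n).
Definition Var := (('I_n * 'I_3) + 'I_3)%type.
Definition env (v' : 'I_n -> vec) (q : vec) : Var -> C :=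
  fun x => match x with inl y => v' y.1 0 y.2 | inr s => q 0 s end.
Definition pline (i : 'I_n) : nat -> mpoly C Var := fun k => PVar C (inl (i, inord k)).
Definition pq : nat -> mpoly C Var := fun k => PVar C (inr (inord k)).
Lemma veval_line v' q i : veval (env v' q) (pline i) = v' i.
Proof. by apply/rowP => s; rewrite mxE /= inord_val. Qed.
Lemma veval_q v' q : veval (env v' q) pq = q.
Proof. by apply/rowP => s; rewrite mxE /= inord_val. Qed.

Definition Lf (L : nat -> mpoly C Var) v' q := veval (env v' q) L.

Definition mk3 (a b c : C) : vec :=
  \row_(s < 3) (if nat_of_ord s == 0%N then a else if nat_of_ord s == 1%N then b else c).
Lemma mk3E q : q = mk3 (co q 0) (co q 1) (co q 2).
Proof. by apply: vec_eq; rewrite /co !mxE !inordK. Qed.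

Lemma polyfun_mk3 fa fb fc s : polyfun fa -> polyfun fb -> polyfun fc ->
  polyfun (fun t => mk3 (fa t) (fb t) (fc t) 0 s).
Proof.
move=> [Pa ha] [Pb hb] [Pc hc].
exists (if nat_of_ord s == 0%N then Pa else if nat_of_ord s == 1%N then Pb else Pc) => t.
by rewrite mxE; case: ifP => _; [|case: ifP => _].
Qed.

Lemma grid_env v' (F : mpoly C Var) :
  (forall i j k : nat, peval (env v' (mk3 i%:R j%:R k%:R)) F = 0) ->
  forall q, peval (env v' q) F = 0.
Proof.
move=> h q; rewrite (mk3E q).
apply: (grid3 (f := fun a b c => peval (env v' (mk3 a b c)) F)) => //.
- move=> a b; apply: peval_polyfun => -[y|s]; first exact: polyfun_const.
  exact: (@polyfun_mk3 (fun _ => a) (fun _ => b) id s (polyfun_const _) (polyfun_const _) polyfun_id).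
- move=> a c; apply: peval_polyfun => -[y|s]; first exact: polyfun_const.
  exact: (@polyfun_mk3 (fun _ => a) id (fun _ => c) s (polyfun_const _) polyfun_id (polyfun_const _)).
- move=> b c; apply: peval_polyfun => -[y|s]; first exact: polyfun_const.
  exact: (@polyfun_mk3 id (fun _ => b) (fun _ => c) s polyfun_id (polyfun_const _) (polyfun_const _)).
Qed.

Variable K : C -> Prop.
Hypothesis hK : is_subfield K.
Variable A : 'I_n.+1 -> vec.
Notation A' := (fun i : 'I_n => A (lift N i)).

Lemma RK_RC' m (B : 'I_m -> vec) u : RK K (incid B) u <-> RC' B u /\ forall i, CK K (u i).
Proof.
split.
- by move=> [hr hk]; split => //; apply/RCE.
- by move=> [hr hk]; split => //; apply/RCE.
Qed.

Lemma core (L : nat -> mpoly C Var)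
  (Lc : forall v' q, RC' A' v' -> forall i j, i != j -> cp (A' i) (A' j) (A N) ->
        cp (v' i) (v' j) (Lf L v' q))
  (La : forall v' q, (forall i, CK K (v' i)) -> Kv K q -> CK K (Lf L v' q))
  (dense : zdense (RK K (incid A')) (RC (incid A')))
  v q0 (hv : RC' A v) (hq0 : Lf L (fun i => v (lift N i)) q0 = v N)
  p (hp : forall u, RK K (incid A) u -> peval (coords u) p = 0) :
  peval (coords v) p = 0.
Proof.
set v' := fun i => v (lift N i).
set h0 := v N.
have [rv' h0nz h0np h0cp] := RC'_restrict hv.
have [s0 hs0] : exists s0 : 'I_3, h0 0 s0 != 0.
  case: (vec_neq0 h0nz) => [h|[h|h]]; by eexists; exact: h.
pose sel (i : 'I_n) : 'I_3 := odflt ord0 [pick s | cross h0 (v' i) 0 s != 0].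
have hsel : forall i, cross h0 (v' i) 0 (sel i) != 0.
  move=> i; rewrite /sel; case: pickP => [s hs //|hn] /=.
  have : cross h0 (v' i) = 0 by apply/rowP => s; move: (hn s) => /negbFE /eqP ->; rewrite mxE.
  move/cross0_prop => /(_ (rv'.1 i)) hp'; by case: (h0np i) => hh _; case: hh.
pose f1 := L (nat_of_ord s0).
pose f2 (i : 'I_n) := pcross L (pline i) (nat_of_ord (sel i)).
pose f3 (i j : 'I_n) := if (i != j) && (det3 (v' i) (v' j) h0 != 0)
   then pdot L (pcross (pline i) (pline j)) else @PConst C Var 1.
pose r := PMul f1 (PMul (mprod (enum 'I_n) f2) (mprod (enum 'I_n) (fun i => mprod (enum 'I_n) (f3 i)))).
pose sg (y : 'I_n.+1 * 'I_3) : mpoly C Var :=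
  match unlift N y.1 with Some i => PVar C (inl (i, y.2)) | None => L (nat_of_ord y.2) end.
pose F := PMul (msubst p sg) r.
have E1 : forall v'' q, peval (env v'' q) (msubst p sg) = peval (coords (ext v'' (Lf L v'' q))) p.
  move=> v'' q; rewrite peval_subst; apply: peval_ext => -[x s] /=.
  rewrite /sg /coords /ext /=; case: (unlift N x) => [i|] //=.
  by rewrite /Lf veval_ent.
have E2 : forall v'' q, peval (env v'' q) r != 0 ->
   [/\ Lf L v'' q != 0,
       forall i, cross (Lf L v'' q) (v'' i) != 0 &
       forall i j, i != j -> det3 (v' i) (v' j) h0 != 0 -> ~ cp (v'' i) (v'' j) (Lf L v'' q)].
  move=> v'' q /=; rewrite !mulf_eq0 !negb_or => /andP [n1 /andP [n2 n3]].
  rewrite !peval_mprod in n2 n3.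
  move/prod_enum_neq0: n2 => n2; move/prod_enum_neq0: n3 => n3.
  rewrite /Lf; split.
  - by apply: contraNneq n1; rewrite /f1 -veval_ent => ->; rewrite mxE.
  - move=> i; move: (n2 i); rewrite /f2 -veval_ent veval_cross veval_line.
    by apply: contraNneq => ->; rewrite mxE.
  - move=> i j hij hd; move: (n3 i); rewrite peval_mprod => /prod_enum_neq0 /(_ j).
    rewrite /f3 hij hd andbT peval_dot veval_cross !veval_line => hne /cp_det.
    by move=> h; rewrite h eqxx in hne.
have E3 : forall v'' q, RK K (incid A') v'' -> Kv K q -> peval (env v'' q) F = 0.
  move=> v'' q /RK_RC' [rc ck] kq.
  change (peval (env v'' q) (msubst p sg) * peval (env v'' q) r = 0).
  case: (eqVneq (peval (env v'' q) r) 0) => [->|rnz]; first by rewrite mulr0.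
  have [a1 a2 a3] := E2 _ _ rnz.
  rewrite E1 hp ?mul0r //; apply/RK_RC'; split.
  - apply: RC'_ext => //.
    + move=> i; split => hpp.
      * by move: (a2 i); rewrite (_ : cross _ _ = 0) ?eqxx //; case: hpp => l ->; rewrite cross_prop.
      * by move: (a2 i); rewrite (_ : cross _ _ = 0) ?eqxx //; case: hpp => l ->; rewrite cross_prop'.
    + move=> i j hij; split; last exact: Lc.
      move=> hc; apply: NNPP => hnc.
      apply: (a3 _ _ hij) => //.
      apply: contra_notN hnc => /eqP /det3_cp hcp.
      by apply/(h0cp _ _ hij).
  - move=> x; case: (ordS_case x) => [->|[y ->]]; rewrite ?ext_max ?ext_lift //.
    exact: La.
have E4 : forall v'' q, RK K (incid A') v'' -> peval (env v'' q) F = 0.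
  move=> v'' q hr; apply: grid_env => i j k; apply: E3 => // s.
  by rewrite mxE; case: ifP => _; [|case: ifP => _]; apply: Knat.
have E5 : forall v'' q, RC (incid A') v'' -> peval (env v'' q) F = 0.
  move=> v'' q hr.
  pose tau (x : Var) : mpoly C ('I_n * 'I_3) :=
    match x with inl y => PVar C y | inr s => @PConst C ('I_n * 'I_3) (q 0 s) end.
  have G : forall u, peval (coords u) (msubst F tau) = peval (env u q) F.
    by move=> u; rewrite peval_subst; apply: peval_ext => -[y|s].
  rewrite -G; apply: (dense _ _ v'') => // u hu; rewrite G; exact: E4.
have := E5 v' q0 (iffRL (RCE _ _) rv'); rewrite /= E1 hq0.
have -> : peval (coords (ext v' h0)) p = peval (coords v) p.
  by apply: peval_ext => -[x s]; rewrite /coords /= ext_restrict.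
move=> /eqP; rewrite mulf_eq0 => /orP [/eqP //|].
move=> hr0; exfalso; move: hr0; apply/negP.
rewrite /= !mulf_eq0 !negb_or; apply/andP; split; last (apply/andP; split).
- by rewrite /f1 -veval_ent -/(Lf L v' q0) hq0.
- rewrite peval_mprod; apply/prod_enum_neq0 => i.
  by rewrite /f2 -veval_ent veval_cross veval_line -/(Lf L v' q0) hq0.
- rewrite peval_mprod; apply/prod_enum_neq0 => i; rewrite peval_mprod; apply/prod_enum_neq0 => j.
  rewrite /f3; case: ifP => [/andP [_ hd]|_]; last exact: oner_neq0.
  by rewrite peval_dot veval_cross !veval_line -/(Lf L v' q0) hq0 -det3E.
Qed.

Lemma cross_nz u w : w != 0 -> ~ proportional u w -> cross u w != 0.
Proof. by move=> hw hp; apply/eqP => h; apply: hp; apply: cross0_prop. Qed.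

Lemma cp_aba a b : cp a b a. Proof. exact: cpC2 (cp_aab a b). Qed.
Lemma cp_abb a b : cp a b b. Proof. exact: cp_rotr (cp_aab b a). Qed.

Lemma transfer m (B u : 'I_m -> vec) a b x : RC' B u -> a != b ->
  (cp (B a) (B b) (B x) <-> cp (u a) (u b) (u x)).
Proof.
move=> [_ [_ r3]] hab.
case: (eqVneq x a) => [->|hxa]; first by split => _; apply: cp_aba.
case: (eqVneq x b) => [->|hxb]; first by split => _; apply: cp_abb.
apply: iff_sym; apply: r3 => //; by rewrite eq_sym.
Qed.

Lemma prop_perp X Y z : proportional X Y -> dot z Y = 0 -> dot z X = 0.
Proof. by case=> l ->; rewrite dotZr => ->; rewrite mulr0. Qed.

Lemma dot_perpL P q : dot (cross P q) P = 0.
Proof. by rewrite dotC dot_cross_l. Qed.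

Lemma cases (arr : arrangement A) (am : atMost2Mult A [set: 'I_n.+1] N) :
  exists L : nat -> mpoly C Var,
   [/\ (forall v' q, RC' A' v' -> forall i j, i != j -> cp (A' i) (A' j) (A N) ->
          cp (v' i) (v' j) (Lf L v' q)),
       (forall v' q, (forall i, CK K (v' i)) -> Kv K q -> CK K (Lf L v' q)) &
       (forall v, RC' A v -> exists q0, Lf L (fun i => v (lift N i)) q0 = v N)].
Proof.
have [anz anp] := arr.
have A'np : forall i j, i != j -> ~ proportional (A' i) (A' j).
  by move=> i j hij; apply: anp; rewrite lift_neq.
pose D i j := i != j /\ cp (A' i) (A' j) (A N).
pose thr a b x := cp (A' a) (A' b) (A' x).
case: (classic (exists a b, D a b)) => [[a [b [hab Dab]]]|nD]; last first.
  exists pq; split.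
  - by move=> v' q _ i j hij hc; case: nD; exists i, j.
  - by move=> v' q _ kq; rewrite /Lf veval_q; apply: CK_Kv.
  - by move=> v _; exists (v N); rewrite /Lf veval_q.
have Pnz : forall (v' : 'I_n -> vec) a b, RC' A' v' -> a != b -> cross (v' a) (v' b) != 0.
  by move=> v' a' b' [r1 [r2 _]] h; apply: cross_nz; [apply: r1|apply: r2].
have onP : forall (v' : 'I_n -> vec) a b x, RC' A' v' -> a != b -> thr a b x ->
    dot (v' x) (cross (v' a) (v' b)) = 0.
  by move=> v' a' b' x rv h t; apply/cp_det; apply/(transfer _ rv h).
have onPN : forall v, RC' A v -> dot (v N) (cross (v (lift N a)) (v (lift N b))) = 0.
  move=> v rv; have [_ _ _ h4] := RC'_restrict rv.
  by apply/cp_det; apply/(h4 _ _ hab).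
case: (classic (forall i j, D i j -> thr a b i /\ thr a b j)) => [all1|].
  exists (pcross (pcross (pline a) (pline b)) pq); split.
  - move=> v' q rv i j hij Dij; rewrite /Lf veval_cross veval_cross !veval_line veval_q.
    have [ti tj] := all1 _ _ (conj hij Dij).
    apply: (cp_of (Pnz _ _ _ rv hab)); [exact: onP ti|exact: onP tj|exact: dot_perpL].
  - move=> v' q ck kq; rewrite /Lf veval_cross veval_cross !veval_line veval_q.
    by apply: CK_cross => //; [apply: CK_cross|apply: CK_Kv].
  - move=> v rv; have [rv' _ _ _] := RC'_restrict rv.
    have [q0 hq0] := perp_cross (Pnz _ _ _ rv' hab) (onPN _ rv).
    by exists q0; rewrite /Lf veval_cross veval_cross !veval_line veval_q.
move=> hnot.
have [c [d [[hcd Dcd] ncd]]] : exists c d, D c d /\ ~ (thr a b c /\ thr a b d).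
  apply: NNPP => hn; apply: hnot => i j Dij; apply: NNPP => hn'; apply: hn.
  by exists i, j.
have key : forall i j, D i j -> (thr a b i /\ thr a b j) \/ (thr c d i /\ thr c d j).
  move=> i j [hij Dij]; apply: NNPP => hn; apply: am.
  pose PA := cross (A' a) (A' b); pose QA := cross (A' c) (A' d); pose RA := cross (A' i) (A' j).
  have mP : forall a' b', a' != b' -> cp (A' a') (A' b') (A N) ->
      onLine (cross (A' a') (A' b')) (A N) /\ multPt A [set: 'I_n.+1] (cross (A' a') (A' b')).
    move=> a' b' h hc; split; first by apply/onLineE; apply/cp_det.
    split; first by apply: cross_nz; [apply: anz|apply: A'np].
    exists (lift N a'), (lift N b'), N; split; first by rewrite !inE.
    split; first by split; rewrite ?lift_neq ?lift_neqN // eq_sym lift_neqN.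
    split; first exact: dot_cross_l.
    split; first exact: dot_cross_r.
    by apply/onLineE; apply/cp_det.
  have [oP mPA] := mP _ _ hab Dab; have [oQ mQA] := mP _ _ hcd Dcd; have [oR mRA] := mP _ _ hij Dij.
  exists PA, QA, RA; split; first by split.
  split; first by split.
  split.
  - move=> pr; apply: ncd; split; apply/cp_det; apply: (prop_perp pr); exact: dot_cross_l || exact: dot_cross_r.
  - move=> pr; apply: hn; right; split; apply/cp_det; apply: (prop_perp pr); exact: dot_cross_l || exact: dot_cross_r.
  - move=> pr; apply: hn; left; split; apply/cp_det; apply: (prop_perp pr); exact: dot_cross_l || exact: dot_cross_r.
exists (pscale (PVar C (inr ord0)) (pcross (pcross (pline a) (pline b)) (pcross (pline c) (pline d)))).
split.
- move=> v' q rv i j hij Dij; rewrite /Lf veval_scale !veval_cross !veval_line /=.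
  case: (key _ _ (conj hij Dij)) => [[ti tj]|[ti tj]].
  + apply: (cp_of (Pnz _ _ _ rv hab)); [exact: onP ti|exact: onP tj|].
    by rewrite dotC dotZr dot_cross_l mulr0.
  + apply: (cp_of (Pnz _ _ _ rv hcd)); [exact: onP ti|exact: onP tj|].
    by rewrite dotC dotZr dot_cross_r mulr0.
- move=> v' q ck kq; rewrite /Lf veval_scale !veval_cross !veval_line.
  by apply: CK_scale; apply: CK_cross => //; apply: CK_cross.
- move=> v rv; have [rv' _ _ h4] := RC'_restrict rv.
  set v' := fun i => v (lift N i).
  set P := cross (v' a) (v' b); set Q := cross (v' c) (v' d).
  have hP : dot (v N) P = 0 by apply/cp_det; apply/(h4 _ _ hab).
  have hQ : dot (v N) Q = 0 by apply/cp_det; apply/(h4 _ _ hcd).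
  have PQnz : cross P Q != 0.
    apply/eqP => /(cross0_prop (Pnz _ _ _ rv' hcd)) pr; apply: ncd.
    split; apply/(transfer _ rv' hab); apply/cp_det; apply: (prop_perp pr);
      exact: dot_cross_l || exact: dot_cross_r.
  have : cross (v N) (cross P Q) = 0 by rewrite crossBAC hP hQ !scale0r subrr.
  move/(cross0_prop PQnz) => [l hl].
  exists (mk3 l 0 0); rewrite /Lf veval_scale !veval_cross !veval_line /=.
  by rewrite mxE /= hl.
Qed.
End Core.

Lemma zdense_ex m (S X : ('I_m -> vec) -> Prop) v : zdense S X -> X v -> exists u, S u.
Proof.
move=> d xv; apply: NNPP => hn.
have h : peval (coords v) (@PConst C ('I_m * 'I_3) 1) = 0.
  by apply: (d _ _ v xv) => u su; case: hn; exists u.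
by move: (oner_neq0 C); rewrite -[1]/(peval (coords v) (@PConst C ('I_m * 'I_3) 1)) h eqxx.
Qed.

Lemma part1 (K : C -> Prop) (hK : is_subfield K) n (A : 'I_n.+1 -> vec) :
  arrangement A -> atMost2Mult A [set: 'I_n.+1] ord_max ->
  zdense (RK K (incid (fun i : 'I_n => A (widen_ord (leqnSn n) i))))
         (RC (incid (fun i : 'I_n => A (widen_ord (leqnSn n) i)))) ->
  zdense (RK K (incid A)) (RC (incid A)) /\ exists v, RK K (incid A) v.
Proof.
move=> arr am.
have -> : (fun i : 'I_n => A (widen_ord (leqnSn n) i)) = (fun i => A (lift ord_max i)).
  by apply: functional_extensionality => i; rewrite widen_lift.
move=> dense.
have [L [Lc La Lb]] := cases hK arr am.
have zd : zdense (RK K (incid A)) (RC (incid A)).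
  move=> p hp v /RCE rv; have [q0 hq0] := Lb v rv.
  exact: (core hK Lc La dense rv hq0 hp).
split => //; apply: (zdense_ex zd (v := A)); apply/RCE; exact: arr_RC'.
Qed.

Lemma RC'_reindex k m (B u : 'I_m -> vec) (g : 'I_k -> 'I_m) : injective g ->
  RC' B u -> RC' (fun i => B (g i)) (fun i => u (g i)).
Proof.
move=> gi [r1 [r2 r3]]; split => //; split.
- by move=> i j hij; apply: r2; rewrite (inj_eq gi).
- by move=> i j l hij hjl hil; apply: r3; rewrite (inj_eq gi).
Qed.

Lemma arr_reindex k m (B : 'I_m -> vec) (g : 'I_k -> 'I_m) : injective g ->
  arrangement B -> arrangement (fun i => B (g i)).
Proof.
by move=> gi [h1 h2]; split => // i j hij; apply: h2; rewrite (inj_eq gi).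
Qed.

Lemma ratK_sub : is_subfield (@ratK C).
Proof.
split; first by exists 1; rewrite rmorph1.
split.
- by move=> x y [a ->] [b ->]; exists (a - b); rewrite rmorphB.
- move=> x y [a ->] [b ->] hb; exists (a / b); by rewrite fmorph_div.
Qed.

Lemma zdense0 (K : C -> Prop) (S : {set 'I_0} -> Prop) : zdense (RK K S) (RC S).
Proof.
move=> p hp v hv; apply: hp; split => // i; by case: i.
Qed.

Lemma part2 m (A : 'I_m -> vec) : arrangement A -> ind_connected A ->
  exists v, RK (@ratK C) (incid A) v.
Proof.
move=> arr [sigma ic].
pose B := fun t => A (sigma t).
have arrB : arrangement B by apply: arr_reindex => //; exact: perm_inj.
pose Bk k (H : (k <= m)%N) := fun t : 'I_k => B (widen_ord H t).
have widen_inj : forall k (H : (k <= m)%N), injective (widen_ord H).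
  by move=> k H x y /(congr1 val) /= /val_inj.
have claim : forall k (H : (k <= m)%N), zdense (RK (@ratK C) (incid (Bk k H))) (RC (incid (Bk k H))).
  elim=> [|k IH] H; first exact: zdense0.
  have H' : (k <= m)%N := ltnW H.
  have := part1 ratK_sub (A := Bk k.+1 H).
  have -> : (fun i : 'I_k => Bk k.+1 H (widen_ord (leqnSn k) i)) = Bk k H'.
    by apply: functional_extensionality => i; rewrite /Bk; congr B; apply: val_inj.
  move=> /(_ _ _ (IH H')) [] //.
  - exact: arr_reindex.
  - pose t := Ordinal H.
    move: (ic t) => am [p1 [p2 [p3 [[o1 o2 o3] [[m1 m2 m3] [n12 n23 n13]]]]]].
    apply: am; exists p1, p2, p3.
    have eN : sigma t = sigma (widen_ord H ord_max) by have -> : t = widen_ord H ord_max by apply: val_inj.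
    have tr : forall p, multPt (Bk k.+1 H) [set: 'I_k.+1] p ->
        multPt A [set sigma u | u : 'I_m & (u <= t)%N] p.
      move=> p [pnz [i [j [l [_ [[hij hjl hil] [oi [oj ol]]]]]]]].
      split => //.
      exists (sigma (widen_ord H i)), (sigma (widen_ord H j)), (sigma (widen_ord H l)).
      split.
        split; apply/imsetP; eexists; try reflexivity; rewrite inE /= -ltnS ltn_ord //.
      split => //.
      by split; rewrite (inj_eq perm_inj) (inj_eq (widen_inj _ _)).
    rewrite eN; split; first by split.
    split; first by split; apply: tr.
    by split.
move: (claim m (leqnn m)).
have -> : Bk m (leqnn m) = B.
  by apply: functional_extensionality => i; rewrite /Bk; congr B; apply: val_inj.
move=> dB.
have [u /RK_RC' [ru cu]] := zdense_ex dB (iffRL (RCE _ _) (arr_RC' arrB)).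
exists (fun i => u ((sigma^-1)%g i)); apply/RK_RC'; split; last by move=> i; apply: cu.
have := RC'_reindex (g := fun i => (sigma^-1)%g i) (@perm_inj _ _) ru.
have -> : (fun i => B ((sigma^-1)%g i)) = A.
  by apply: functional_extensionality => i; rewrite /B permKV.
done.
Qed.
End Geo.

Theorem mainTheorem5 :
  (forall (C : numClosedFieldType) (K : C -> Prop), is_subfield K ->
   forall (n : nat) (A : 'I_n.+1 -> vec3 C),
     arrangement A ->
     atMost2Mult A [set: 'I_n.+1] ord_max ->
     let A' := fun i : 'I_n => A (widen_ord (leqnSn n) i) in
     zdense (RK K (incid A')) (RC (incid A')) ->
     zdense (RK K (incid A)) (RC (incid A)) /\ exists v, RK K (incid A) v)
  /\
  (forall (C : numClosedFieldType) (m : nat) (A : 'I_m -> vec3 C),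
     arrangement A -> ind_connected A ->
     exists v, RK (@ratK C) (incid A) v).
Proof.
split.
- move=> C K hK n A arr am A' d; exact: (part1 hK arr am d).
- move=> C m A arr ic; exact: (part2 arr ic).
Qed.
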